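(* For $n\ge 4$, the network space $\mathfrak S_n$ is a connected simplicial complex of dimension $n(n-3)/2-1$, whose $k$-simplices correspond bijectively to the split systems consisting of $k+1$ nontrivial splits that are circular with respect to some circular ordering of $X$ (equivalently, to labeled $n$-gons with $k+1$ diagonals, two labeled polygons being identified when they represent the same split system).
   Context: $X$ is a set of $n\ge4$ labels. A split of $X$ is an unordered partition $\{A,B\}$ of $X$ into two nonempty sets; it is trivial if one part has one element. A circular ordering of $X$ is a cyclic arrangement $\pi=(x_1,\dots,x_n)$ up to rotation and reflection; a split is circular w.r.t. $\pi$ if it has the form $\{\{x_{i+1},\dots,x_j\},X\setminus\{x_{i+1},\dots,x_j\}\}$ (indices mod $n$); it then corresponds to a diagonal of a regular $n$-gon whose edges are labeled cyclically by $\pi$. Let $\delta=2^{n-1}-n-1$ be the number of nontrivial splits and give $\mathbb R^\delta$ coordinates indexed by nontrivial splits. For each circular ordering $\pi$ let $O_\pi\subset\mathbb R^\delta$ be the set of nonnegative vectors whose support consists of splits circular w.r.t. $\pi$. The space of circular split networks is $\mathrm{CSN}_n=\bigcup_\pi O_\pi$, and the network space is $\mathfrak S_n=\{x\in \mathrm{CSN}_n:\sum x_s=1\}=\bigcup_\pi \Delta_\pi$ where $\Delta_\pi=O_\pi\cap\{\sum x_s=1\}$ is a simplex (a chamber); faces of chambers are the sets of points whose support lies in a given subsystem. *)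

(* Defs.v *)
From Stdlib Require Import Reals.
From mathcomp Require Import ssreflect ssrfun ssrbool eqtype ssrnat seq choice
  div fintype finfun bigop finset fingroup perm.

Set Implicit Arguments.
Unset Strict Implicit.
Unset Printing Implicit Defensive.

Definition is_ntsplit (n : nat) (P : {set {set 'I_n}}) : bool :=
  [exists A : {set 'I_n}, [&& P == [set A; ~: A], 1 < #|A| & 1 < #|~: A|]].

(* The finite type of nontrivial splits: it indexes the coordinates of R^delta. *)
Definition nsplit (n : nat) := {P : {set {set 'I_n}} | is_ntsplit P}.

(* A circular ordering pi = (x_0, ..., x_{n-1}) is given by a permutation:
   x_k = pi k; the position of label x is pi^-1 x.  The part
   {x_{i+1}, ..., x_{i+m}} (indices mod n) is the set of labels x with
   1 <= (pos x - i) mod n <= m. *)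
Definition cyc_part (n : nat) (pi : {perm 'I_n}) (i : 'I_n) (m : nat)
  : {set 'I_n} :=
  [set x | 0 < ((pi^-1)%g x + n - i) %% n <= m].

Definition circ (n : nat) (pi : {perm 'I_n}) (P : {set {set 'I_n}}) : Prop :=
  exists (i : 'I_n) (m : nat), P = [set cyc_part pi i m; ~: cyc_part pi i m].

Definition circsys (n : nat) (S : {set nsplit n}) : Prop :=
  exists pi : {perm 'I_n}, forall s, s \in S -> circ pi (val s).

Definition Rsum (I : finType) (f : I -> R) : R := \big[Rplus/R0]_(i : I) f i.

Definition chamber (n : nat) (pi : {perm 'I_n}) (x : nsplit n -> R) : Prop :=
  (forall s, Rle R0 (x s)) /\ Rsum x = R1 /\
  (forall s, x s <> R0 -> circ pi (val s)).

Definition network (n : nat) (x : nsplit n -> R) : Prop :=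
  exists pi : {perm 'I_n}, chamber pi x.

Definition chamber_face (n : nat) (pi : {perm 'I_n}) (S : {set nsplit n})
  (x : nsplit n -> R) : Prop :=
  chamber pi x /\ (forall s, x s <> R0 -> s \in S).

Definition unitv (n : nat) (s : nsplit n) : nsplit n -> R :=
  fun t => if t == s then R1 else R0.

Section Geom.
Variables (I J : finType) (p : I -> J -> R).
(* p : vertex placement, vertices I, points of R^J. *)

Definition conv (sigma : {set I}) (x : J -> R) : Prop :=
  exists lam : I -> R,
    (forall i, Rle R0 (lam i)) /\ (forall i, i \notin sigma -> lam i = R0) /\
    Rsum lam = R1 /\ (forall j, x j = Rsum (fun i => Rmult (lam i) (p i j))).

Definition aff_indep (sigma : {set I}) : Prop :=
  forall c : I -> R, (forall i, i \notin sigma -> c i = R0) ->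
    Rsum c = R0 -> (forall j, Rsum (fun i => Rmult (c i) (p i j)) = R0) ->
    forall i, c i = R0.

Definition geom_complex (K : {set I} -> Prop) : Prop :=
  (forall sigma, K sigma -> sigma != set0 /\ aff_indep sigma) /\
  (forall sigma tau : {set I}, K sigma -> tau \subset sigma -> tau != set0 -> K tau) /\
  (forall sigma tau : {set I}, K sigma -> K tau ->
     forall x, (conv sigma x /\ conv tau x) <-> conv (sigma :&: tau) x).

Definition polyhedron (K : {set I} -> Prop) (x : J -> R) : Prop :=
  exists sigma, K sigma /\ conv sigma x.

Definition complex_dim (K : {set I} -> Prop) (d : nat) : Prop :=
  (exists sigma, K sigma /\ #|sigma|.-1 = d) /\
  (forall sigma, K sigma -> #|sigma|.-1 <= d).
End Geom.

Definition ball (J : finType) (x : J -> R) (eps : R) (y : J -> R) : Prop :=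
  forall j, Rlt (Rabs (Rminus (y j) (x j))) eps.

Definition relopen (J : finType) (A U : (J -> R) -> Prop) : Prop :=
  forall x, A x -> U x -> exists eps, Rlt R0 eps /\
    forall y, A y -> ball x eps y -> U y.

Definition connected (J : finType) (A : (J -> R) -> Prop) : Prop :=
  forall U W : (J -> R) -> Prop, relopen A U -> relopen A W ->
    (forall x, A x -> U x \/ W x) -> (forall x, A x -> U x -> W x -> False) ->
    (forall x, A x -> ~ U x) \/ (forall x, A x -> ~ W x).

Definition circ_complex (n : nat) (S : {set nsplit n}) : Prop :=
  S != set0 /\ circsys S.

(* Main.v *)
From HB Require Import structures.
Require Import Defs.
From Stdlib Require Import Reals Lra Classical FunctionalExtensionality.
From mathcomp Require Import ssreflect ssrfun ssrbool eqtype ssrnat seq choice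
  div fintype finfun bigop finset fingroup perm.
From mathcomp Require Import zify.
Set Implicit Arguments. Unset Strict Implicit. Unset Printing Implicit Defensive.

Lemma RplusA : associative Rplus. Proof. by move=> *; rewrite Rplus_assoc. Qed.
HB.instance Definition Rplus_monoid := Monoid.isComLaw.Build R R0 Rplus RplusA Rplus_comm Rplus_0_l.

Lemma Rsum_dirac (I : finType) (lam : I -> R) (j : I) :
  Rsum (fun i => Rmult (lam i) (if j == i then R1 else R0)) = lam j.
Proof.
rewrite /Rsum (bigD1 j) //= eqxx big1 ?Rmult_1_r ?Rplus_0_r //.
by move=> i /negbTE; rewrite eq_sym => ->; rewrite Rmult_0_r.
Qed.

Lemma Rsum0 (I : finType) (f : I -> R) : (forall i, f i = R0) -> Rsum f = R0.
Proof. by move=> h; rewrite /Rsum big1. Qed.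

Lemma Rsum_unitv (n : nat) (s : nsplit n) : Rsum (unitv s) = R1.
Proof.
rewrite /Rsum (bigD1 s) //= /unitv eqxx big1 ?Rplus_0_r //.
by move=> i /negbTE ->.
Qed.

Lemma conv_unitv (n : nat) (S : {set nsplit n}) (x : nsplit n -> R) :
  conv (@unitv n) S x <->
  (forall s, Rle R0 (x s)) /\ (forall s, s \notin S -> x s = R0) /\ Rsum x = R1.
Proof.
split.
- move=> [lam [h1 [h2 [h3 h4]]]].
  have E : forall j, x j = lam j by move=> j; rewrite h4; exact: Rsum_dirac.
  split; first by move=> s; rewrite E.
  split; first by move=> s hs; rewrite E h2.
  by rewrite -h3 /Rsum; apply: eq_bigr => i _; rewrite E.
- move=> [h1 [h2 h3]]; exists x; do 3 split => //.
  by move=> j; rewrite Rsum_dirac.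
Qed.

Definition nzb (r : R) : bool := if Req_EM_T r R0 then false else true.
Lemma nzbP r : nzb r <-> r <> R0.
Proof. by rewrite /nzb; case: Req_EM_T. Qed.

Lemma part1 (n : nat) (pi : {perm 'I_n}) (S : {set nsplit n}) :
     S != set0 -> (forall s, s \in S -> circ pi (val s)) ->
     forall x, chamber_face pi S x <-> conv (@unitv n) S x.
Proof.
move=> _ hS x; rewrite conv_unitv; split.
- move=> [[h1 [h2 h3]] h4]; do 2 split => //.
  move=> s hs; case: (Req_dec (x s) R0) => // /h4; by rewrite (negbTE hs).
- move=> [h1 [h2 h3]].
  have h4 : forall s, x s <> R0 -> s \in S.
    move=> s hx; apply/negPn/negP => /h2; exact: hx.
  split => //; do 2 split => //.
  by move=> s /h4 /hS.
Qed.

Lemma part2 (n : nat) : geom_complex (@unitv n) (@circ_complex n).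
Proof.
split; [|split].
- move=> sigma [h1 h2]; split => // c _ _ hc i.
  by rewrite -(hc i) /unitv Rsum_dirac.
- move=> sigma tau [h1 [pi hpi]] hsub htau; split => //; exists pi => s hs.
  by apply: hpi; apply: (subsetP hsub).
- move=> sigma tau _ _ x; rewrite !conv_unitv; split.
  + move=> [[h1 [h2 h3]] [_ [h5 _]]]; do 2 split => //.
    by move=> s; rewrite inE negb_and => /orP [/h2|/h5].
  + move=> [h1 [h2 h3]]; split; do 2 split => //.
    * by move=> s hs; apply: h2; rewrite inE (negbTE hs).
    * by move=> s hs; apply: h2; rewrite inE (negbTE hs) andbF.
Qed.

Lemma part3 (n : nat) x : @network n x <-> polyhedron (@unitv n) (@circ_complex n) x.
Proof.
split.
- move=> [pi [h1 [h2 h3]]].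
  exists [set s | nzb (x s)]; split; last first.
    rewrite conv_unitv; do 2 split => //.
    by move=> s; rewrite inE => hs; case: (Req_dec (x s) R0) => // /nzbP; rewrite (negbTE hs).
  split.
    apply/set0Pn; case: (boolP [exists s, nzb (x s)]).
      by move=> /existsP [s hs]; exists s; rewrite inE.
    move=> /existsPn hn; exfalso.
    have : Rsum x = R0.
      by apply: Rsum0 => s; case: (Req_dec (x s) R0) => // /nzbP; rewrite (negbTE (hn s)).
    by rewrite h2; exact: R1_neq_R0.
  by exists pi => s; rewrite inE => /nzbP /h3.
- move=> [S [[hS [pi hpi]] hc]]; move: hc; rewrite conv_unitv => [[h1 [h2 h3]]].
  exists pi; do 2 split => //.
  move=> s hx; apply: hpi; apply/negPn/negP => /h2; exact: hx.
Qed.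

Lemma part4 (n : nat) (S T : {set nsplit n}) : circ_complex S -> circ_complex T ->
     (forall x, conv (@unitv n) S x <-> conv (@unitv n) T x) -> S = T.
Proof.
move=> _ _ h.
have key : forall S T : {set nsplit n}, (forall x, conv (@unitv n) S x -> conv (@unitv n) T x) -> S \subset T.
  move=> S' T' h'; apply/subsetP => s hs.
  have : conv (@unitv n) S' (unitv s).
    rewrite conv_unitv; split; first by move=> t; rewrite /unitv; case: eqP => _; lra.
    split; last exact: Rsum_unitv.
    by move=> t ht; rewrite /unitv; case: eqP => // e; move: ht; rewrite e hs.
  move/h'; rewrite conv_unitv => [[_ [h2 _]]].
  apply/negPn/negP => /h2; rewrite /unitv eqxx; exact: R1_neq_R0.
apply/eqP; rewrite eqEsubset !key // => x; by move/h.
Qed.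

Lemma offE (n a i : nat) : a < n -> i < n ->
  (a + n - i) %% n = if i <= a then a - i else a + n - i.
Proof.
move=> ha hi; case: leqP => h.
  have -> : a + n - i = (a - i) + n by lia.
  by rewrite modnDr modn_small //; lia.
by rewrite modn_small //; lia.
Qed.


Lemma cnt (n a b : nat) : \sum_(m < n) ((a <= m) && (m < b)) = minn b n - a.
Proof.
elim: n => [|n IH]; first by rewrite big_ord0; lia.
rewrite big_ord_recr /= IH; case: (leqP a n) => h1; case: (ltnP n b) => h2 /=; lia.
Qed.

Definition Gset n : {set 'I_n * 'I_n} := [set p : 'I_n * 'I_n | [&& 1 < p.2, p.2 <= n - 2 & p.1 + p.2 < n]].

Lemma tri (N : nat) : (\sum_(i < N) (i - 1)).*2 = (N - 1) * (N - 2).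
Proof.
elim: N => [|N IH]; first by rewrite big_ord0.
rewrite big_ord_recr /= doubleD IH; case: N {IH} => [|N] //=; nia.
Qed.

Lemma cardG n : 3 <= n -> (#|Gset n|).*2 = n * (n - 3).
Proof.
move=> hn.
have -> : #|Gset n| = \sum_(i < n) \sum_(j < n) ((1 < j) && (j <= n-2) && (i+j<n)).
  rewrite pair_bigA -sum1_card big_mkcond /=; apply: eq_bigr => p _.
  by rewrite inE andbA; case: ifP.
have -> : \sum_(i < n) \sum_(j < n) ((1 < j) && (j <= n-2) && (i+j<n)) =
          \sum_(i < n) (minn (minn (n-1) (n-i)) n - 2).
  apply: eq_bigr => i _; rewrite -cnt; apply: eq_bigr => j _; lia.
case: n hn => [|N] // hn.
rewrite (reindex_inj rev_ord_inj) /= big_ord_recr /=.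
have -> : \sum_(i < N) (minn (minn (N.+1 - 1) (N.+1 - (N.+1 - i.+1))) N.+1 - 2) =
          \sum_(i < N) (i - 1).
  apply: eq_bigr => i _; have := ltn_ord i; lia.
rewrite doubleD tri; lia.
Qed.

Definition Ppi n (pi : {perm 'I_n}) (p : 'I_n * 'I_n) : {set {set 'I_n}} :=
  [set cyc_part pi p.1 p.2; ~: cyc_part pi p.1 p.2].

Lemma cyccomp n (pi : {perm 'I_n}) (i : 'I_n) (m : nat) (h : i + m - n < n) :
  m < n -> n <= i + m -> cyc_part pi (Ordinal h) (n - m) = ~: cyc_part pi i m.
Proof.
move=> h1 h2; apply/setP => x; rewrite !inE /= !offE //.
have := ltn_ord i; have := ltn_ord ((pi^-1)%g x); move: (nat_of_ord ((pi^-1)%g x)) => a; case: ifP; case: ifP; lia.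
Qed.

Lemma pos_inj n (pi : {perm 'I_n}) (x y : 'I_n) :
  (pi^-1)%g x = (pi^-1)%g y :> nat -> x = y.
Proof. by move/val_inj/perm_inj. Qed.

Lemma canon n (pi : {perm 'I_n}) (s : nsplit n) : circ pi (val s) ->
  exists2 p, p \in Gset n & val s = Ppi pi p.
Proof.
move=> [i [m hs]].
have [A /and3P [/eqP hA h1 h2]] := existsP (valP s).
set C := cyc_part pi i m in hs.
have hC : 1 < #|C| /\ 1 < #|~: C|.
  have : C \in val s by rewrite hs set21.
  by rewrite hA => /set2P [->|->]; rewrite ?setCK.
have hin : i < n := ltn_ord i.
have hm2 : 2 <= m.
  case: (leqP 2 m) => // hm; exfalso; move: hC => [+ _]; apply/negP; rewrite -leqNgt.
  apply/card_le1_eqP => x y; rewrite !inE !offE //.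
  have := ltn_ord ((pi^-1)%g x); have := ltn_ord ((pi^-1)%g y).
  move=> hx hy h3 h4; apply: (@pos_inj _ pi); move: h3 h4; case: ifP; case: ifP; lia.
have hmn : m <= n - 2.
  case: (leqP m (n - 2)) => // hm; exfalso; move: hC => [_]; apply/negP; rewrite -leqNgt.
  apply/card_le1_eqP => x y; rewrite !inE !offE //.
  have := ltn_ord ((pi^-1)%g x); have := ltn_ord ((pi^-1)%g y).
  move=> hx hy h3 h4; apply: (@pos_inj _ pi); move: h3 h4; case: ifP; case: ifP; lia.
have hmn' : m < n by lia.
case: (ltnP (i + m) n) => him.
  exists (i, Ordinal hmn'); first by rewrite inE /=; lia.
  by rewrite hs.
have h3 : i + m - n < n by lia.
have h4 : n - m < n by lia.
exists (Ordinal h3, Ordinal h4); first by rewrite inE /=; lia.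
rewrite hs /Ppi /= cyccomp; [|lia|lia].
by rewrite setCK setUC.
Qed.

Lemma card_bound n (sigma : {set nsplit n}) : circsys sigma -> #|sigma| <= #|Gset n|.
Proof.
move=> [pi hpi].
pose h := fun s : nsplit n => [pick p in Gset n | val s == Ppi pi p].
have hh : forall s, s \in sigma -> exists p, [/\ h s = Some p, p \in Gset n & val s = Ppi pi p].
  move=> s hs; rewrite /h; case: pickP => [p /andP [hp /eqP e]| hn]; first by exists p.
  have [p hp e] := canon (hpi s hs); by move: (hn p); rewrite hp e eqxx.
rewrite -(card_in_imset (f:=h)); last first.
  move=> s t hs ht e; have [p [e1 _ e2]] := hh s hs; have [q [e3 _ e4]] := hh t ht.
  apply: val_inj; rewrite e2 e4; rewrite e1 e3 in e; by case: e => ->.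
rewrite -(card_imset (Gset n) (@Some_inj _)); apply: subset_leq_card; apply/subsetP => o /imsetP [s hs ->].
have [p [e1 hp _]] := hh s hs; rewrite e1; exact: imset_f.
Qed.

Lemma memG1 n (p : 'I_n * 'I_n) (x : 'I_n) : p \in Gset n ->
  (x \in cyc_part 1 p.1 p.2) = (p.1 < x <= p.1 + p.2).
Proof.
case: p => a b; rewrite !inE /= invg1 perm1 offE //.
have := ltn_ord a; have := ltn_ord x; case: ifP; lia.
Qed.

Lemma memG1' n (a b x : 'I_n) : (a, b) \in Gset n ->
  (x \in cyc_part 1 a b) = (a < x <= a + b).
Proof. exact: memG1. Qed.

Lemma P1inj n : 0 < n -> {in Gset n &, injective (@Ppi n 1)}.
Proof.
move=> n0 [a b] [c d] hp hq e.
have H : cyc_part 1 a b \in Ppi 1 (c, d) by rewrite -e /Ppi set21.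
have hp' := hp; have hq' := hq; move: hp' hq'; rewrite !inE /= => /and3P [p1 p2 p3] /and3P [q1 q2 q3].
move: H; rewrite /Ppi /= => /set2P [E|E]; last first.
  move/setP: E => /(_ (Ordinal n0)); rewrite in_setC (memG1' _ hp) (memG1' _ hq) /=; lia.
move/setP: E => M.
have h1 : a + 1 < n by lia.
have h2 : c + 1 < n by lia.
have h3 : a + b < n by lia.
have h4 : c + d < n by lia.
have := M (Ordinal h1); have := M (Ordinal h2); have := M (Ordinal h3); have := M (Ordinal h4).
rewrite !(memG1' _ hp) !(memG1' _ hq) /= => e1 e2 e3 e4.
have eac : a = c by apply: val_inj; rewrite /=; lia.
have ebd : b = d by apply: val_inj; rewrite /=; lia.
by rewrite eac ebd.
Qed.

Lemma ntsplit1 n (p : 'I_n * 'I_n) : p \in Gset n -> is_ntsplit (Ppi 1 p).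
Proof.
move=> hp; apply/existsP; exists (cyc_part 1 p.1 p.2); rewrite /Ppi eqxx /=.
have hp' := hp; move: hp'; rewrite inE => /and3P [q1 q2 q3].
apply/andP; split; apply/card_gt1P.
  have h1 : p.1 + 1 < n by lia.
  have h2 : p.1 + 2 < n by lia.
  exists (Ordinal h1), (Ordinal h2); rewrite !memG1 //=; split; try lia.
  by apply/eqP => /(congr1 val) /=; lia.
have n0 : 0 < n by lia.
have hn1 : n - 1 < n by lia.
case: (posnP p.1) => ha.
  exists (Ordinal n0), (Ordinal hn1); rewrite !in_setC !memG1 //=; split; try lia.
  by apply/eqP => /(congr1 val) /=; lia.
exists (Ordinal n0), p.1; rewrite !in_setC !memG1 //=; split; try lia.
by apply/eqP => /(congr1 val) /=; lia.
Qed.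

Lemma sigma0_ex n : 4 <= n -> exists sigma : {set nsplit n},
  circ_complex sigma /\ #|sigma| = #|Gset n|.
Proof.
move=> hn.
pose sigma := [set s : nsplit n | [exists p in Gset n, val s == Ppi 1 p]].
have cs : circsys sigma.
  exists 1%g => s; rewrite inE => /existsP [p /andP [_ /eqP e]].
  by exists p.1, p.2; rewrite e.
have hc : #|sigma| = #|Gset n|.
  apply/eqP; rewrite eqn_leq card_bound //=.
  rewrite -(card_in_imset (P1inj _)); last by lia.
  rewrite -(card_imset sigma val_inj); apply: subset_leq_card.
  apply/subsetP => P /imsetP [p hp ->]; apply/imsetP.
  exists (Sub (Ppi 1 p) (ntsplit1 hp)); last by rewrite SubK.
  by rewrite inE; apply/existsP; exists p; rewrite hp SubK eqxx.
exists sigma; split => //; split => //.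
rewrite -card_gt0 hc; have := cardG (n:=n); lia.
Qed.

Lemma part5 n : 4 <= n -> complex_dim (@circ_complex n) ((n * (n - 3))./2 - 1).
Proof.
move=> hn.
have hG : #|Gset n| = (n * (n - 3))./2.
  by rewrite -cardG ?doubleK //; lia.
split.
  have [sigma [h1 h2]] := sigma0_ex hn; exists sigma; split => //.
  by rewrite h2 hG subn1.
move=> sigma [_ hs]; have := card_bound hs; rewrite hG; lia.
Qed.

Lemma Rsum_ge_term (I : finType) (f : I -> R) (j : I) :
  (forall i, Rle R0 (f i)) -> Rle (f j) (Rsum f).
Proof.
move=> h; rewrite /Rsum (bigD1 j) //=.
have : Rle R0 (\big[Rplus/R0]_(i | i != j) f i).
  by apply: (big_ind (fun r => Rle R0 r)) => //; [lra | move=> a b; lra].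
lra.
Qed.

Lemma Rsum_ge0 (I : finType) (f : I -> R) : (forall i, Rle R0 (f i)) -> Rle R0 (Rsum f).
Proof. by move=> h; apply: (big_ind (fun r => Rle R0 r)) => //; [lra | move=> a b; lra]. Qed.

Definition segp (J : finType) (x y : J -> R) (t : R) : J -> R :=
  fun j => (x j + t * (y j - x j))%R.

Lemma seg_ball (J : finType) (x y : J -> R) (eps : R) : (0 < eps)%R ->
  exists d, (0 < d)%R /\ forall s t, (Rabs (s - t) < d)%R -> ball (segp x y t) eps (segp x y s).
Proof.
move=> he.
pose M := (Rsum (fun j => Rabs (y j - x j)) + 1)%R.
have hM : forall j, (Rabs (y j - x j) <= M)%R.
  move=> j; rewrite /M.
  have := @Rsum_ge_term J (fun j => Rabs (y j - x j)) j (fun i => Rabs_pos _); lra.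
have hM1 : (1 <= M)%R.
  have := @Rsum_ge0 J (fun j => Rabs (y j - x j)) (fun i => Rabs_pos _); rewrite /M; lra.
exists (eps / M)%R; split.
  apply: Rdiv_lt_0_compat; lra.
move=> s t hst j; rewrite /segp.
have -> : (x j + s * (y j - x j) - (x j + t * (y j - x j)) = (s - t) * (y j - x j))%R by ring.
rewrite Rabs_mult.
have h1 : (Rabs (s - t) * Rabs (y j - x j) <= Rabs (s - t) * M)%R.
  apply: Rmult_le_compat_l => //; exact: Rabs_pos.
have h2 : (Rabs (s - t) * M < eps / M * M)%R.
  apply: Rmult_lt_compat_r => //; lra.
have h3 : (eps / M * M = eps)%R by field; lra.
lra.
Qed.

Lemma seg_conn (J : finType) (Aset U W : (J -> R) -> Prop) (x y : J -> R) :
  relopen Aset U -> relopen Aset W -> (forall z, Aset z -> U z \/ W z) ->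
  (forall z, Aset z -> U z -> W z -> False) ->
  (forall t, (0 <= t <= 1)%R -> Aset (segp x y t)) -> U (segp x y 0) -> U (segp x y 1).
Proof.
move=> hU hW hcov hdis hA U0.
pose E t := (0 <= t <= 1)%R /\ forall s, (0 <= s <= t)%R -> U (segp x y s).
have bE : bound E by exists 1%R => t [[_ ?] _].
have E0 : E 0%R.
  split; first lra.
  by move=> s hs; have -> : s = 0%R by lra.
have nE : exists t, E t by exists 0%R.
case: (completeness E bE nE) => T [ub lub].
have T0 : (0 <= T)%R by apply: ub.
have T1 : (T <= 1)%R by apply: lub => t [[_ ?] _].
have close : forall d, (0 < d)%R -> exists t, E t /\ (T - d < t)%R.
  move=> d hd; apply: NNPP => hn.
  have : (T <= T - d)%R.
    apply: lub => t Et; apply: Rnot_lt_le => lt; apply: hn; by exists t.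
  lra.
have AT := hA T (conj T0 T1).
case: (hcov _ AT) => [UT | WT].
- have [eps [he hb]] := hU _ AT UT.
  have [d [hd hball]] := seg_ball x y he.
  have Em : E (Rmin 1 (T + d / 2)).
    have m1 := Rmin_l 1 (T + d / 2); have m2 := Rmin_r 1 (T + d / 2).
    have m3 : (0 <= Rmin 1 (T + d / 2))%R by apply: Rmin_glb; lra.
    split; first lra.
    move=> s [s0 s1]; case: (Rlt_or_le s T) => hsT.
      have [t [[_ Ht] ht]] := close (T - s)%R ltac:(lra).
      apply: Ht; lra.
    case: (Req_dec s T) => [-> //| neq].
    apply: hb; first by apply: hA; lra.
    apply: hball; apply: Rabs_def1; lra.
  have := ub _ Em.
  rewrite /Rmin; case: Rle_dec => h1 h2; last lra.
  by have <- : T = 1%R by lra.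
- have [eps [he hb]] := hW _ AT WT.
  have [d [hd hball]] := seg_ball x y he.
  have [t [[[t0 t1] Ht] ht]] := close d hd.
  have tT : (t <= T)%R by apply: ub; split => //; split => //.
  exfalso; apply: (hdis (segp x y t)); first by apply: hA; lra.
    by apply: Ht; lra.
  apply: hb; first by apply: hA; lra.
  apply: hball; apply: Rabs_def1; lra.
Qed.

Lemma interval_circ n (pi : {perm 'I_n}) (B : {set 'I_n}) (l r : nat) :
  (forall x, (x \in B) = (l <= (pi^-1)%g x < r)) -> l <= r -> r <= n ->
  (exists y, y \notin B) -> exists (i : 'I_n) (m : nat), B = cyc_part pi i m.
Proof.
move=> hB hlr hrn [y hy].
have hyn := ltn_ord ((pi^-1)%g y).
move: hy; rewrite hB => hy.
case: (posnP l) => hl.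
  have hn1 : n - 1 < n by lia.
  exists (Ordinal hn1), r; apply/setP => x; rewrite hB inE /= offE //.
  have := ltn_ord ((pi^-1)%g x); move: (nat_of_ord ((pi^-1)%g x)) => a; case: ifP; lia.
have hl1 : l - 1 < n by lia.
exists (Ordinal hl1), (r - l); apply/setP => x; rewrite hB inE /= offE //.
have := ltn_ord ((pi^-1)%g x); move: (nat_of_ord ((pi^-1)%g x)) => a; case: ifP; lia.
Qed.

Lemma perm_of_index n (L : seq 'I_n) : size L = n -> (forall x, x \in L) ->
  exists pi : {perm 'I_n}, forall x, (pi^-1)%g x = index x L :> nat.
Proof.
move=> hs hm.
have hi : forall x, index x L < n by move=> x; have := index_mem x L; rewrite hm hs.
pose f := fun x => Ordinal (hi x).
have finj : injective f.
  move=> x y /(congr1 val) /= e.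
  by rewrite -(nth_index x (hm x)) e nth_index.
exists (perm finj)^-1%g => x; by rewrite invgK permE.
Qed.

Lemma count4 (T : Type) (a c : pred T) (s : seq T) :
  count (fun x => a x && c x) s + (count (fun x => a x && ~~ c x) s +
  (count (fun x => ~~ a x && ~~ c x) s + count (fun x => ~~ a x && c x) s)) = size s.
Proof. elim: s => //= x s IH; case: (a x); case: (c x) => /=; lia. Qed.

Lemma common_order n (s t : nsplit n) :
  exists pi : {perm 'I_n}, circ pi (val s) /\ circ pi (val t).
Proof.
have [A /and3P [/eqP hA a1 a2]] := existsP (valP s).
have [C /and3P [/eqP hC c1 c2]] := existsP (valP t).
pose L1 := [seq x <- ord_enum n | (x \in A) && (x \in C)].
pose L2 := [seq x <- ord_enum n | (x \in A) && (x \notin C)].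
pose L3 := [seq x <- ord_enum n | (x \notin A) && (x \notin C)].
pose L4 := [seq x <- ord_enum n | (x \notin A) && (x \in C)].
pose L := L1 ++ L2 ++ L3 ++ L4.
have hmem : forall x, x \in L.
  by move=> x; rewrite /L /L1 /L2 /L3 /L4 !mem_cat !mem_filter !mem_ord_enum; case: (x \in A); case: (x \in C).
have hsize : size L = n.
  rewrite /L /L1 /L2 /L3 /L4 !size_cat !size_filter.
  have := count4 (fun x => x \in A) (fun x => x \in C) (ord_enum n).
  by rewrite -(size_map val) val_ord_enum size_iota.
have [pi hpi] := perm_of_index hsize hmem.
have hidx : forall x, ((x \in A) = (index x L < size L1 + size L2)) /\
    ((x \notin C) = (size L1 <= index x L < size L1 + size L2 + size L3)).
  move=> x; rewrite /L !index_cat.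
  have i1 := index_mem x L1; have i2 := index_mem x L2;
  have i3 := index_mem x L3; have i4 := index_mem x L4.
  move: i1 i2 i3 i4; rewrite /L1 /L2 /L3 /L4 !mem_filter !mem_ord_enum.
  case: (x \in A); case: (x \in C) => /= j1 j2 j3 j4; lia.
have ha : exists y, y \notin A.
  have : 0 < #|~: A| by lia.
  by move=> /card_gt0P [y hy]; exists y; rewrite -in_setC.
have hc : exists y, y \notin ~: C.
  have : 0 < #|C| by lia.
  by move=> /card_gt0P [y hy]; exists y; rewrite in_setC hy.
have hsz : size L1 + size L2 + size L3 <= n by move: hsize; rewrite /L !size_cat; lia.
exists pi; split.
  have [i [m e]] := @interval_circ n pi A 0 (size L1 + size L2)
     ltac:(move=> x; rewrite hpi (proj1 (hidx x)); lia) ltac:(lia) ltac:(lia) ha.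
  by exists i, m; rewrite hA -e.
have [i [m e]] := @interval_circ n pi (~: C) (size L1) (size L1 + size L2 + size L3)
   ltac:(move=> x; rewrite hpi in_setC (proj2 (hidx x)); lia) ltac:(lia) hsz hc.
by exists i, m; rewrite hC -e setCK setUC.
Qed.

Lemma Rsum_lin (J : finType) (a b : J -> R) t :
  Rsum (segp a b t) = (Rsum a + t * (Rsum b - Rsum a))%R.
Proof.
rewrite /Rsum /segp.
apply: (big_rec3 (fun u v w => u = (v + t * (w - v))%R)); first ring.
by move=> i u v w _ ->; ring.
Qed.

Lemma chamber_seg n (pi : {perm 'I_n}) a b t : chamber pi a -> chamber pi b ->
  (0 <= t <= 1)%R -> chamber pi (segp a b t).
Proof.
move=> [a1 [a2 a3]] [b1 [b2 b3]] ht; split; [|split].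
- move=> s; rewrite /segp.
  have := a1 s; have := b1 s => h1 h2.
  have : (0 <= (1 - t) * a s)%R by apply: Rmult_le_pos; lra.
  have : (0 <= t * b s)%R by apply: Rmult_le_pos; lra.
  lra.
- by rewrite Rsum_lin a2 b2; ring.
- move=> s hs; case: (Req_dec (a s) R0) => ha; last exact: a3.
  case: (Req_dec (b s) R0) => hb; last exact: b3.
  by exfalso; apply: hs; rewrite /segp ha hb; ring.
Qed.

Lemma chamber_unit n (pi : {perm 'I_n}) (s : nsplit n) : circ pi (val s) -> chamber pi (unitv s).
Proof.
move=> hc; split; [|split].
- by move=> t; rewrite /unitv; case: eqP => _; lra.
- exact: Rsum_unitv.
- by move=> t; rewrite /unitv; case: eqP => [-> //|_ []].
Qed.

Lemma segp0 (J : finType) (a b : J -> R) : segp a b 0 = a.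
Proof. by apply: functional_extensionality => j; rewrite /segp; ring. Qed.
Lemma segp1 (J : finType) (a b : J -> R) : segp a b 1 = b.
Proof. by apply: functional_extensionality => j; rewrite /segp; ring. Qed.

Lemma supp_ex (I : finType) (x : I -> R) : Rsum x = R1 -> exists s, x s <> R0.
Proof.
move=> h; apply: NNPP => hn.
have : Rsum x = R0.
  by apply: Rsum0 => s; case: (Req_dec (x s) R0) => // hs; exfalso; apply: hn; exists s.
by rewrite h; exact: R1_neq_R0.
Qed.

Lemma part6 n : connected (@network n).
Proof.
move=> U W hU hW hcov hdis.
case: (classic (exists x, network x /\ U x)) => [[x0 [nx0 Ux0]]|hnU]; last first.
  by left => x nx Ux; apply: hnU; exists x.
case: (classic (exists y, network y /\ W y)) => [[y0 [ny0 Wy0]]|hnW]; last first.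
  by right => x nx Wx; apply: hnW; exists x.
exfalso.
have tr : forall pi a b, chamber pi a -> chamber pi b -> U a -> U b.
  move=> pi a b ha hb Ua; rewrite -(segp1 a b).
  apply: (seg_conn hU hW hcov hdis) => [t ht|]; last by rewrite segp0.
  by exists pi; apply: chamber_seg.
have [pi0 ch0] := nx0; have [pi1 ch1] := ny0.
have [s hs] := supp_ex (proj1 (proj2 ch0)).
have [t ht] := supp_ex (proj1 (proj2 ch1)).
have [sg [cs ct]] := common_order s t.
have U1 := tr _ _ _ ch0 (chamber_unit (proj2 (proj2 ch0) s hs)) Ux0.
have U2 := tr _ _ _ (chamber_unit cs) (chamber_unit ct) U1.
have U3 := tr _ _ _ (chamber_unit (proj2 (proj2 ch1) t ht)) ch1 U2.
exact: (hdis y0 ny0 U3 Wy0).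
Qed.

Theorem proposition5 (n : nat) (hn : 4 <= n) :
  (forall (pi : {perm 'I_n}) (S : {set nsplit n}),
     S != set0 -> (forall s, s \in S -> circ pi (val s)) ->
     forall x, chamber_face pi S x <-> conv (@unitv n) S x) /\
  geom_complex (@unitv n) (@circ_complex n) /\
  (forall x, @network n x <-> polyhedron (@unitv n) (@circ_complex n) x) /\
  (forall S T, circ_complex S -> circ_complex T ->
     (forall x, conv (@unitv n) S x <-> conv (@unitv n) T x) -> S = T) /\
  complex_dim (@circ_complex n) ((n * (n - 3))./2 - 1) /\
  connected (@network n).
Proof.
split; first exact: part1.
split; first exact: part2.
split; first exact: part3.
split; first exact: part4.
split; first exact: part5.
exact: part6.
Qed.
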